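(* Let $\rho:A\to C$ and $\sigma:B\to C$ be ring homomorphisms and let $D:=\rho\times_C\sigma=\{(a,b)\in A\times B:\rho(a)=\sigma(b)\}$. Let $p_A:D\to A$ and $p_B:D\to B$ be the restrictions to $D$ of the projections of $A\times B$. The following are equivalent: (i) the set of all ideals of $D$ is totally ordered by inclusion; (ii) at least one of the following holds: (a) $\rho$ is injective and the set of all ideals of $p_B(D)$ is totally ordered by inclusion; (b) $\sigma$ is injective and the set of all ideals of $p_A(D)$ is totally ordered by inclusion.
   Context: All rings are commutative with identity. *)

(* Defs.v *)
From HB Require Import structures.
From mathcomp Require Import all_boot all_order all_algebra.
Set Implicit Arguments. Unset Strict Implicit. Unset Printing Implicit Defensive.
Import GRing.Theory.
Local Open Scope ring_scope.

Definition is_ideal_of (R : comPzRingType) (S I : R -> Prop) : Prop :=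
  [/\ (forall x, I x -> S x),
      I 0,
      (forall x y, I x -> I y -> I (x - y)) &
      (forall s x, S s -> I x -> I (s * x))].

Definition ideals_chain (R : comPzRingType) (S : R -> Prop) : Prop :=
  forall I J : R -> Prop, is_ideal_of S I -> is_ideal_of S J ->
    (forall x, I x -> J x) \/ (forall x, J x -> I x).

Definition fibre_prod (A B C : comPzRingType)
  (rho : {rmorphism A -> C}) (sigma : {rmorphism B -> C}) : (A * B)%type -> Prop :=
  fun d => rho d.1 = sigma d.2.

Definition projA_fp (A B C : comPzRingType)
  (rho : {rmorphism A -> C}) (sigma : {rmorphism B -> C}) : A -> Prop :=
  fun a => exists d, fibre_prod rho sigma d /\ d.1 = a.
Definition projB_fp (A B C : comPzRingType)
  (rho : {rmorphism A -> C}) (sigma : {rmorphism B -> C}) : B -> Prop :=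
  fun b => exists d, fibre_prod rho sigma d /\ d.2 = b.

(* Main.v *)
Require Import Defs.
From HB Require Import structures.
From mathcomp Require Import all_boot all_order all_algebra.
Local Open Scope ring_scope.
Import GRing.Theory.

Section H.
Variables (A B C : comPzRingType)
  (rho : {rmorphism A -> C}) (sigma : {rmorphism B -> C}).
Let D := fibre_prod rho sigma.

Lemma D0 : D 0.
Proof. by rewrite /D /fibre_prod /= !rmorph0. Qed.
Lemma DB x y : D x -> D y -> D (x - y).
Proof. by rewrite /D /fibre_prod /= !rmorphB => -> ->. Qed.
Lemma DM x y : D x -> D y -> D (x * y).
Proof. by rewrite /D /fibre_prod /= !rmorphM => -> ->. Qed.

Lemma liftB J : is_ideal_of (projB_fp rho sigma) J ->
  is_ideal_of D (fun d => D d /\ J d.2).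
Proof.
case=> JS J0 JB JM; split.
- by move=> x [].
- by split; [exact: D0|].
- by move=> x y [Dx Jx] [Dy Jy]; split; [exact: DB| exact: JB].
- move=> s x Ds [Dx Jx]; split; first exact: DM.
  by apply: JM => //; exists s.
Qed.

Lemma liftA J : is_ideal_of (projA_fp rho sigma) J ->
  is_ideal_of D (fun d => D d /\ J d.1).
Proof.
case=> JS J0 JB JM; split.
- by move=> x [].
- by split; [exact: D0|].
- by move=> x y [Dx Jx] [Dy Jy]; split; [exact: DB| exact: JB].
- move=> s x Ds [Dx Jx]; split; first exact: DM.
  by apply: JM => //; exists s.
Qed.

Lemma pushB I : is_ideal_of D I ->
  is_ideal_of (projB_fp rho sigma) (fun b => exists d, I d /\ d.2 = b).
Proof.
case=> IS I0 IB IM; split.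
- by move=> x [d [Id <-]]; exists d; split => //; apply: IS.
- by exists 0.
- by move=> x y [d [Id <-]] [e [Ie <-]]; exists (d - e); split => //; apply: IB.
- move=> s x [e [De <-]] [d [Id <-]]; exists (e * d); split => //.
  exact: IM.
Qed.

Lemma pushA I : is_ideal_of D I ->
  is_ideal_of (projA_fp rho sigma) (fun b => exists d, I d /\ d.1 = b).
Proof.
case=> IS I0 IB IM; split.
- by move=> x [d [Id <-]]; exists d; split => //; apply: IS.
- by exists 0.
- by move=> x y [d [Id <-]] [e [Ie <-]]; exists (d - e); split => //; apply: IB.
- move=> s x [e [De <-]] [d [Id <-]]; exists (e * d); split => //.
  exact: IM.
Qed.

Lemma recB I : injective rho -> is_ideal_of D I ->
  forall d, D d -> (exists e, I e /\ e.2 = d.2) -> I d.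
Proof.
move=> inj [IS _ _ _] [a b] Dd [[a' b'] [Ie /= E]]; subst b'.
have De := IS _ Ie.
move: Dd De; rewrite /D /fibre_prod /= => Dd De.
have : a = a' by apply: inj; rewrite Dd De.
by move=> ->.
Qed.

Lemma recA I : injective sigma -> is_ideal_of D I ->
  forall d, D d -> (exists e, I e /\ e.1 = d.1) -> I d.
Proof.
move=> inj [IS _ _ _] [a b] Dd [[a' b'] [Ie /= E]]; subst a'.
have De := IS _ Ie.
move: Dd De; rewrite /D /fibre_prod /= => Dd De.
have : b = b' by apply: inj; rewrite -Dd -De.
by move=> ->.
Qed.

Lemma inj_ker (R S : comPzRingType) (f : {rmorphism R -> S}) :
  (forall x, f x = 0 -> x = 0) -> injective f.
Proof.
move=> H x y E; apply/eqP; rewrite -subr_eq0; apply/eqP; apply: H.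
by rewrite rmorphB E subrr.
Qed.
End H.
Arguments liftB {A B C rho sigma J}.
Arguments liftA {A B C rho sigma J}.
Arguments pushB {A B C rho sigma I}.
Arguments pushA {A B C rho sigma I}.
Arguments recB {A B C rho sigma I}.
Arguments recA {A B C rho sigma I}.
Arguments inj_ker {R S f}.

Theorem proposition4p9 (A B C : comPzRingType)
  (rho : {rmorphism A -> C}) (sigma : {rmorphism B -> C}) :
  ideals_chain (fibre_prod rho sigma) <->
  ((injective rho /\ ideals_chain (projB_fp rho sigma)) \/
   (injective sigma /\ ideals_chain (projA_fp rho sigma))).
Proof.
split.
- move=> ch.
  pose KA := fun d : (A * B)%type => d.2 = 0 /\ rho d.1 = 0.
  pose KB := fun d : (A * B)%type => d.1 = 0 /\ sigma d.2 = 0.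
  have iKA : is_ideal_of (fibre_prod rho sigma) KA.
    split.
    + by move=> [a b] [/= -> H]; rewrite /fibre_prod /= H rmorph0.
    + by rewrite /KA /= rmorph0.
    + by move=> [a b] [a' b'] [/= -> Ha] [/= -> Ha']; rewrite /KA /= subr0 rmorphB Ha Ha' subr0.
    + by move=> [s t] [a b] _ [/= -> Ha]; rewrite /KA /= mulr0 rmorphM Ha mulr0.
  have iKB : is_ideal_of (fibre_prod rho sigma) KB.
    split.
    + by move=> [a b] [/= -> H]; rewrite /fibre_prod /= H rmorph0.
    + by rewrite /KB /= rmorph0.
    + by move=> [a b] [a' b'] [/= -> Ha] [/= -> Ha']; rewrite /KB /= subr0 rmorphB Ha Ha' subr0.
    + by move=> [s t] [a b] _ [/= -> Ha]; rewrite /KB /= mulr0 rmorphM Ha mulr0.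
  case: (ch _ _ iKA iKB) => sub.
  + left; split.
    * apply: inj_ker => x Hx.
      by have [] := sub (x, 0) (conj erefl Hx).
    * move=> J1 J2 i1 i2.
      case: (ch _ _ (liftB i1) (liftB i2)) => s; [left|right] => b.
      - move=> Jb; case: i1 => h _ _ _; have [d [Dd E]] := h b Jb; subst b.
        by case: (s d (conj Dd Jb)).
      - move=> Jb; case: i2 => h _ _ _; have [d [Dd E]] := h b Jb; subst b.
        by case: (s d (conj Dd Jb)).
  + right; split.
    * apply: inj_ker => x Hx.
      by have [] := sub (0, x) (conj erefl Hx).
    * move=> J1 J2 i1 i2.
      case: (ch _ _ (liftA i1) (liftA i2)) => s; [left|right] => b.
      - move=> Jb; case: i1 => h _ _ _; have [d [Dd E]] := h b Jb; subst b.
        by case: (s d (conj Dd Jb)).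
      - move=> Jb; case: i2 => h _ _ _; have [d [Dd E]] := h b Jb; subst b.
        by case: (s d (conj Dd Jb)).
- case=> [[inj ch]|[inj ch]] I J iI iJ.
  + case: (ch _ _ (pushB iI) (pushB iJ)) => s; [left|right] => d Id.
    * apply: (recB inj iJ); first by case: iI => h _ _ _; apply: h.
      by apply: s; exists d.
    * apply: (recB inj iI); first by case: iJ => h _ _ _; apply: h.
      by apply: s; exists d.
  + case: (ch _ _ (pushA iI) (pushA iJ)) => s; [left|right] => d Id.
    * apply: (recA inj iJ); first by case: iI => h _ _ _; apply: h.
      by apply: s; exists d.
    * apply: (recA inj iI); first by case: iJ => h _ _ _; apply: h.
      by apply: s; exists d.
Qed.
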